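(* Let $u\in k_F^\times$. The element $\varphi_{\epsilon^{-1}u}(1+\varphi_{\epsilon^{-1}u})\in\mathrm{GL}_{2n+1}(E)$ is strongly $\theta$-regular $\theta$-semisimple, the element $-N(1+\varphi_{\epsilon^{-1}u})\in\mathrm{U}_{E/F}(2n+1)(F)$ is strongly regular semisimple, and $-N(1+\varphi_{\epsilon^{-1}u})$ is a norm of $\varphi_{\epsilon^{-1}u}(1+\varphi_{\epsilon^{-1}u})$.
   Context: $p$ odd, $F$ a $p$-adic field, $E/F$ unramified quadratic with conjugation $c$, $\varpi$ a uniformizer of $F$, $k_E,k_F$ residue fields; $\epsilon\in k_E^\times$ fixed with $\epsilon^2$ a non-square in $k_F^\times$; elements of $k_E$ are identified with their Teichmüller lifts. For $a\in k_E^\times$, $\varphi_a=\begin{pmatrix}0&I_{2n}\\\varpi a&0\end{pmatrix}\in\mathrm{GL}_{2n+1}(E)$. $J\in\mathrm{GL}_{2n+1}(E)$ antidiagonal with $J_{i,2n+2-i}=(-1)^{i-1}$, $\theta(g)=J\,{}^tc(g)^{-1}J^{-1}$, $N(g)=g\theta(g)$, $\mathrm{U}_{E/F}(2n+1)(F)=\{g\in\mathrm{GL}_{2n+1}(E)\mid{}^tc(g)Jg=J\}$. Strong ($\theta$-)regularity and $\theta$-semisimplicity are in the sense of Kottwitz–Shelstad. Norm: $h$ is a norm of $g$ if they correspond under the Kottwitz–Shelstad map from semisimple conjugacy classes of $\mathrm{U}_{E/F}(2n+1)(\bar F)\cong\mathrm{GL}_{2n+1}(\bar F)$ to $\theta$-semisimple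 $\theta$-conjugacy classes of $\mathrm{GL}_{2n+1}(\bar F)^2$, given on diagonal tori by $\mathrm{diag}(t_1/s_{2n+1},\ldots,t_{2n+1}/s_1)\leftrightarrow(\mathrm{diag}(t_i),\mathrm{diag}(s_i))$. *)

(* Defs.v *)
From HB Require Import structures.
From mathcomp Require Import all_boot all_order all_algebra.
Set Implicit Arguments. Unset Strict Implicit. Unset Printing Implicit Defensive.
Import Order.TTheory GRing.Theory Num.Theory.
Local Open Scope ring_scope.

(* Discrete valuations on a field E (the value of v at 0 is irrelevant) *)

Definition vge (E : fieldType) (v : E -> int) (k : int) (x : E) : bool :=
  (x == 0) || (k <= v x).
Definition in_O (E : fieldType) (v : E -> int) (x : E) : bool := vge v 0 x.
Definition in_m (E : fieldType) (v : E -> int) (x : E) : bool := vge v 1 x.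

Definition discrete_valuation (E : fieldType) (v : E -> int) : Prop :=
  [/\ forall x y : E, x != 0 -> y != 0 -> v (x * y) = v x + v y,
      forall (k : int) (x y : E), vge v k x -> vge v k y -> vge v k (x + y)
    & exists x : E, x != 0 /\ v x = 1].

Definition v_complete (E : fieldType) (v : E -> int) : Prop :=
  forall u : nat -> E,
    (forall k : int, exists N, forall i j, (N <= i)%N -> (N <= j)%N -> vge v k (u i - u j)) ->
    exists l : E, forall k : int, exists N, forall i, (N <= i)%N -> vge v k (u i - l).

(* the residue field of the valuation ring {x in O | P x} has exactly q elements:
   a system of q pairwise incongruent representatives mod m exhausting it *)
Definition residue_card (E : fieldType) (v : E -> int) (P : pred E) (q : nat) : Prop :=
  exists s : seq E,
    [/\ size s = q,
        forall x, x \in s -> P x /\ in_O v x,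
        forall i j, (i < q)%N -> (j < q)%N -> i != j -> ~~ in_m v (s`_i - s`_j)
      & forall x, P x -> in_O v x -> exists2 y, y \in s & in_m v (x - y)].

(* E is a p-adic field (char 0, complete, discretely valued, finite residue field
   of characteristic p), c is an involutive automorphism of E with fixed field F,
   F is a p-adic field with residue field of q elements, and E/F is the unramified
   quadratic extension (residue field of E has q^2 elements, uniformizer of F is one of E). *)
Definition unramified_quadratic_padic (p q : nat) (E : fieldType) (v : E -> int)
    (c : {rmorphism E -> E}) : Prop :=
  [/\ [pchar E] =i pred0, discrete_valuation v & v_complete v] /\
  [/\ (forall x, x != 0 -> v (c x) = v x),
      (forall x, c (c x) = x) /\ (exists x, c x != x),
      [/\ prime p, odd p & in_m v p%:R],
      residue_card v (fun x => c x == x) q /\ residue_card v predT (q ^ 2)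
    & exists w : E, [/\ c w = w, w != 0 & v w = 1]].

(* J : antidiagonal, J_{i,2n+2-i} = (-1)^{i-1} (1-indexed), i.e. 0-indexed i+j = m-1, sign (-1)^i *)
Definition Jmx (R : pzRingType) (m : nat) : 'M[R]_m :=
  \matrix_(i < m, j < m) (if (i + j == m.-1)%N then (-1) ^+ i else 0).

Definition theta (E : fieldType) (c : {rmorphism E -> E}) (m : nat) (g : 'M[E]_m) : 'M[E]_m :=
  Jmx E m *m invmx ((map_mx c g)^T) *m invmx (Jmx E m).

Definition Nmap (E : fieldType) (c : {rmorphism E -> E}) (m : nat) (g : 'M[E]_m) : 'M[E]_m :=
  g *m theta c g.

Definition in_unitary (E : fieldType) (c : {rmorphism E -> E}) (m : nat) (g : 'M[E]_m) : bool :=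
  (map_mx c g)^T *m Jmx E m *m g == Jmx E m.

(* phi_a = [[0, I_{m-1}], [varpi a, 0]] *)
Definition phimx (E : fieldType) (varpi a : E) (m : nat) : 'M[E]_m :=
  \matrix_(i < m, j < m)
    (if (j == i.+1 :> nat) then 1
     else if ((i == m.-1 :> nat) && (j == 0 :> nat)) then varpi * a else 0).

(* Res_{E/F} GL_m (K) = GL_m(K)^2 via g |-> (ι g, ι (c g)); U_{E/F}(m)(K) = GL_m(K)
   via g |-> ι g.  On GL_m(K)^2 the automorphism theta becomes
   (x1, x2) |-> (J t(x2)^{-1} J^{-1}, J t(x1)^{-1} J^{-1}). *)

Definition algebraic_closure_of (E : fieldType) (K : closedFieldType)
    (iota : {rmorphism E -> K}) : Prop :=
  forall k : K, exists P : {poly E}, P != 0 /\ root (map_poly iota P) k.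

Definition thetaK (K : fieldType) (m : nat) (y : 'M[K]_m) : 'M[K]_m :=
  Jmx K m *m (invmx y)^T *m invmx (Jmx K m).

Definition GL2 (K : fieldType) (m : nat) (x : 'M[K]_m * 'M[K]_m) : bool :=
  (x.1 \in unitmx) && (x.2 \in unitmx).

Definition theta2 (K : fieldType) (m : nat) (x : 'M[K]_m * 'M[K]_m) : 'M[K]_m * 'M[K]_m :=
  (thetaK x.2, thetaK x.1).

Definition mul2 (K : fieldType) (m : nat) (x y : 'M[K]_m * 'M[K]_m) : 'M[K]_m * 'M[K]_m :=
  (x.1 *m y.1, x.2 *m y.2).

Definition inv2 (K : fieldType) (m : nat) (x : 'M[K]_m * 'M[K]_m) : 'M[K]_m * 'M[K]_m :=
  (invmx x.1, invmx x.2).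

Definition tw_act (K : fieldType) (m : nat) (x d : 'M[K]_m * 'M[K]_m) : 'M[K]_m * 'M[K]_m :=
  mul2 (mul2 x d) (inv2 (theta2 x)).

Definition bc (E : fieldType) (K : fieldType) (iota : {rmorphism E -> K})
    (c : {rmorphism E -> E}) (m : nat) (g : 'M[E]_m) : 'M[K]_m * 'M[K]_m :=
  (map_mx iota g, map_mx iota (map_mx c g)).

Definition diag_pair (K : fieldType) (m : nat) (t s : 'rV[K]_m) : 'M[K]_m * 'M[K]_m :=
  (diag_mx t, diag_mx s).

Definition torus_el (K : fieldType) (m : nat) (t : 'rV[K]_m) : Prop :=
  forall i, t 0 i != 0.

(* theta-semisimple: Int(d) o theta preserves a theta-stable Borel pair; since theta
   preserves the diagonal/upper-triangular pair, this means d is theta-conjugate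
   into the diagonal torus T x T *)
Definition theta_semisimple (K : fieldType) (m : nat) (d : 'M[K]_m * 'M[K]_m) : Prop :=
  exists x, GL2 x /\ exists t s : 'rV[K]_m,
    [/\ torus_el t, torus_el s & tw_act x d = diag_pair t s].

Definition strongly_theta_regular (K : fieldType) (m : nat) (d : 'M[K]_m * 'M[K]_m) : Prop :=
  GL2 d /\
  forall x y, GL2 x -> GL2 y -> tw_act x d = d -> tw_act y d = d -> mul2 x y = mul2 y x.

Definition semisimple (K : fieldType) (m : nat) (h : 'M[K]_m) : Prop :=
  exists y, y \in unitmx /\ exists t : 'rV[K]_m,
    torus_el t /\ y *m h *m invmx y = diag_mx t.

Definition strongly_regular (K : fieldType) (m : nat) (h : 'M[K]_m) : Prop :=
  h \in unitmx /\
  forall x y, x \in unitmx -> y \in unitmx -> x *m h = h *m x -> y *m h = h *m y ->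
    x *m y = y *m x.

(* Kottwitz-Shelstad norm: the semisimple class of h corresponds to the
   theta-semisimple theta-class of d under
   diag(t_i / s_{m+1-i}) <-> (diag(t_i), diag(s_i))  (1-indexed) *)
Definition is_norm (K : fieldType) (m : nat) (h : 'M[K]_m) (d : 'M[K]_m * 'M[K]_m) : Prop :=
  exists t s : 'rV[K]_m, [/\ torus_el t, torus_el s,
    (exists x, GL2 x /\ tw_act x d = diag_pair t s)
  & exists y, y \in unitmx /\
      y *m h *m invmx y = diag_mx (\row_i (t 0 i / s 0 (rev_ord i)))].

(* Main.v *)
Require Import Defs.
From HB Require Import structures.
From mathcomp Require Import all_boot all_order all_algebra all_field.
From mathcomp Require Import zify ring.
Set Implicit Arguments. Unset Strict Implicit. Unset Printing Implicit Defensive.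
Import Order.TTheory GRing.Theory Num.Theory.
Local Open Scope ring_scope.
Lemma sign_even (F : pzRingType) (a b k : nat) : (a + b = k.*2)%N -> (-1) ^+ a * (-1) ^+ b = 1 :> F.
Proof. by move=> h; rewrite -exprD h -signr_odd odd_double. Qed.

Lemma sign_odd (F : pzRingType) (a b k : nat) : (a + b + 1 = k.*2)%N -> (-1) ^+ a * (-1) ^+ b = -1 :> F.
Proof.
move=> h; have := sign_even F h; rewrite exprD expr1 mulrN1 => /eqP.
by rewrite eqr_oppLR => /eqP.
Qed.

Lemma sign_eq (F : pzRingType) (a b k : nat) : (a + b = k.*2)%N -> (-1) ^+ a = (-1) ^+ b :> F.
Proof.
move=> h; have e1 := sign_even F h; have e2 : (-1) ^+ b * (-1) ^+ b = 1 :> F.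
  by apply: (sign_even _ (k := b)); rewrite addnn.
have -> : (-1) ^+ a = (-1) ^+ a * ((-1) ^+ b * (-1) ^+ b) :> F by rewrite e2 mulr1.
by rewrite mulrA e1 mul1r.
Qed.

Section JS.
Variable (F : fieldType) (n : nat).
Local Notation m := n.*2.+1.
Local Notation J := (Jmx F m).

Lemma JmxE (i j : 'I_m) : J i j = if j == rev_ord i then (-1) ^+ i else 0.
Proof.
rewrite mxE; have := ltn_ord i; have := ltn_ord j.
case: i j => [i Hi] [j Hj] /=.
rewrite -[_ == rev_ord _]val_eqE /= -!addnn => _ _.
by case: eqP => h1; case: eqP => h2 //; exfalso; lia.
Qed.

Lemma rev_sum (i : 'I_m) : (i + rev_ord i = n.*2)%N.
Proof. have := ltn_ord i; case: i => i Hi /=; rewrite -!addnn; lia. Qed.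

Lemma mulJ (A : 'M[F]_m) i j : (J *m A) i j = (-1) ^+ i * A (rev_ord i) j.
Proof.
rewrite mxE (bigD1 (rev_ord i)) //= JmxE eqxx big1 ?addr0 // => k /negbTE hk.
by rewrite JmxE hk mul0r.
Qed.

Lemma mulmxJ (A : 'M[F]_m) i j : (A *m J) i j = A i (rev_ord j) * (-1) ^+ (rev_ord j).
Proof.
rewrite mxE (bigD1 (rev_ord j)) //= JmxE rev_ordK eqxx big1 ?addr0 // => k hk.
rewrite JmxE; case: eqP => [e|]; last by rewrite mulr0.
by move: hk; rewrite e rev_ordK eqxx.
Qed.

Lemma JJ : J *m J = 1.
Proof.
apply/matrixP => i j; rewrite mulJ JmxE rev_ordK !mxE eq_sym.
case: eqP => [->|]; last by rewrite mulr0.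
by rewrite (sign_even _ (rev_sum j)).
Qed.

Lemma Jtr : J^T = J.
Proof.
apply/matrixP => i j; rewrite mxE !JmxE.
case: (eqVneq j (rev_ord i)) => [->|h]; first by rewrite rev_ordK eqxx; symmetry; apply: sign_eq (rev_sum i).
case: eqP => // e; by move: h; rewrite e rev_ordK eqxx.
Qed.

Lemma J_unit : J \in unitmx.
Proof. by case: (mulmx1_unit JJ). Qed.

Lemma invJ : invmx J = J.
Proof. by rewrite -[RHS](mulKmx J_unit) JJ mulmx1. Qed.

Definition Sm (A : 'M[F]_m) := J *m A^T *m J.

Lemma Sm_mul A B : Sm (A *m B) = Sm B *m Sm A.
Proof.
rewrite /Sm trmx_mul !mulmxA; congr (_ *m _).
by rewrite -[J *m B^T *m J *m J]mulmxA JJ mulmx1.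
Qed.

Lemma Sm_invol A : Sm (Sm A) = A.
Proof.
by rewrite /Sm !trmx_mul trmxK Jtr !mulmxA JJ mul1mx -mulmxA JJ mulmx1.
Qed.

Lemma Sm1 : Sm 1 = 1.
Proof. by rewrite /Sm trmx1 mulmx1 JJ. Qed.

Lemma SmD A B : Sm (A + B) = Sm A + Sm B.
Proof. by rewrite /Sm linearD /= mulmxDr mulmxDl. Qed.

Lemma SmN A : Sm (- A) = - Sm A.
Proof. by rewrite /Sm linearN /= mulmxN mulNmx. Qed.

Lemma Sm_unit A : (Sm A \in unitmx) = (A \in unitmx).
Proof. by rewrite /Sm !unitmx_mul J_unit unitmx_tr andbT. Qed.

Lemma Sm_inv A : Sm (invmx A) = invmx (Sm A).
Proof.
case uA: (A \in unitmx); last first.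
  by rewrite !invmx_out // inE /= ?Sm_unit uA.
have h : Sm A *m Sm (invmx A) = 1 by rewrite -Sm_mul mulVmx // Sm1.
have uS : Sm A \in unitmx by rewrite Sm_unit uA.
by rewrite -[LHS](mulKmx uS) h mulmx1.
Qed.

Lemma Sm_diag (d : 'rV[F]_m) : Sm (diag_mx d) = diag_mx (\row_i d 0 (rev_ord i)).
Proof.
apply/matrixP => i j; rewrite /Sm mulmxJ mulJ tr_diag_mx !mxE (inj_eq rev_ord_inj).
case: eqP => [->|]; last by rewrite mulr0n mulr0 mul0r.
by rewrite !mulr1n mulrC mulrA [_ * (-1) ^+ j]mulrC (sign_even _ (rev_sum j)) mul1r.
Qed.

End JS.

Lemma map_Jmx (F F' : fieldType) (f : {rmorphism F -> F'}) n :
  map_mx f (Jmx F n) = Jmx F' n.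
Proof. by apply/matrixP => i j; rewrite !mxE (fun_if f) rmorphXn rmorphN1 rmorph0. Qed.

Lemma map_Sm (F F' : fieldType) (f : {rmorphism F -> F'}) n (A : 'M[F]_(n.*2.+1)) :
  map_mx f (Sm A) = Sm (map_mx f A).
Proof. by rewrite /Sm !map_mxM map_trmx map_Jmx. Qed.

Lemma theta_Sm (E : fieldType) (c : {rmorphism E -> E}) n (g : 'M[E]_(n.*2.+1)) :
  theta c g = invmx (Sm (map_mx c g)).
Proof. by rewrite /theta invJ -trmx_inv -Sm_inv. Qed.

Lemma thetaK_Sm (K : fieldType) n (y : 'M[K]_(n.*2.+1)) : thetaK y = Sm (invmx y).
Proof. by rewrite /thetaK invJ. Qed.

Lemma inv_thetaK (K : fieldType) n (y : 'M[K]_(n.*2.+1)) : invmx (thetaK y) = Sm y.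
Proof. by rewrite thetaK_Sm Sm_inv invmxK. Qed.

Lemma SmE (F : fieldType) n (A : 'M[F]_(n.*2.+1)) i j :
  Sm A i j = (-1) ^+ i * (-1) ^+ (rev_ord j) * A (rev_ord j) (rev_ord i).
Proof. by rewrite /Sm mulmxJ mulJ mxE mulrAC. Qed.

Lemma phimxE (F : fieldType) n (w a : F) (i j : 'I_n.*2.+1) :
  phimx w a n.*2.+1 i j =
  if j == ordS i then (if (i == n.*2 :> nat) then w * a else 1) else 0.
Proof.
rewrite mxE; case: i j => [i Hi] [j Hj].
rewrite -[_ == ordS _]val_eqE /=.
have [hi|hi] := eqVneq i n.*2.
  rewrite hi modnn /= -hi; case: (eqVneq j i.+1) => [e|_]; first by exfalso; lia.
  done.
rewrite modn_small; last by lia.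
by case: (eqVneq j i.+1).
Qed.

Lemma map_phimx (F F' : fieldType) (f : {rmorphism F -> F'}) (w a : F) k :
  map_mx f (phimx w a k) = phimx (f w) (f a) k.
Proof.
by apply/matrixP => i j; rewrite !mxE !(fun_if f) rmorph1 rmorph0 rmorphM.
Qed.

Lemma Sm_phimx (F : fieldType) n (w a : F) :
  Sm (phimx w (- a) n.*2.+1) = - phimx w a n.*2.+1.
Proof.
apply/matrixP => i j; rewrite SmE !mxE.
case: i j => [i Hi] [j Hj] /=.
have e1 : (n.*2.+1 - i.+1 == (n.*2.+1 - j.+1).+1)%N = (j == i.+1)%N.
  by apply/eqP/eqP; rewrite -!addnn; lia.
have e2 : ((n.*2.+1 - j.+1 == n.*2) && (n.*2.+1 - i.+1 == 0))%N = ((i == n.*2) && (j == 0))%N.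
  by apply/idP/idP => /andP[/eqP h1 /eqP h2]; apply/andP; split; apply/eqP; rewrite -!addnn in h1 h2 *; lia.
rewrite e1 e2 /=.
case: (eqVneq j i.+1) => [hj|hj].
  rewrite mulr1 (sign_odd _ (k := n)) //; rewrite hj -!addnn; lia.
case: (eqVneq i n.*2) => [hi|hi]; case: (eqVneq j 0%N) => [hj0|hj0] /=; rewrite ?mulr0 ?oppr0 //.
rewrite (sign_even _ (k := n.*2)); first by rewrite mul1r mulrN.
rewrite hi hj0 -!addnn; lia.
Qed.

Lemma twist_comm (R : unitRingType) (x1 S d1 Q : R) :
  x1 \is a GRing.unit -> d1 \is a GRing.unit -> Q \is a GRing.unit ->
  x1 * d1 * S = d1 -> x1 * Q * S = Q -> x1 * (d1 * Q^-1) = (d1 * Q^-1) * x1.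
Proof.
move=> ux ud uQ e1 e2.
have uxd : x1 * d1 \is a GRing.unit by rewrite unitrMl.
have uS : S \is a GRing.unit by move: ud; rewrite -{1}e1 unitrMr.
have uxQ : x1 * Q \is a GRing.unit by rewrite unitrMl.
have key : d1 * Q^-1 = x1 * (d1 * Q^-1) * x1^-1.
  rewrite {1}(esym e1) {1}(esym e2) invrM // invrM //.
  by rewrite !mulrA mulrK.
by rewrite {2}key divrK.
Qed.

Lemma ring_h (R : unitRingType) (x : R) :
  x \is a GRing.unit -> (1 - x) \is a GRing.unit ->
  x * (1 + x) * ((1 - x) * - x)^-1 = - ((1 + x) * (1 - x)^-1).
Proof.
move=> ux u1x.
rewrite invrM ?unitrN // invrN mulNr mulrN.
have -> : x * (1 + x) = (1 + x) * x by rewrite mulrDr mulrDl mulr1 mul1r.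
by rewrite mulrA -[(1 + x) * x * x^-1]mulrA mulrV // mulr1.
Qed.

Lemma ring_unitary (R : unitRingType) (x : R) :
  (1 + x) \is a GRing.unit -> (1 - x) \is a GRing.unit ->
  (1 + x)^-1 * (1 - x) * ((1 + x) * (1 - x)^-1) = 1.
Proof.
move=> u1 u2.
have -> : (1 + x)^-1 * (1 - x) * ((1 + x) * (1 - x)^-1) =
          (1 + x)^-1 * ((1 - x) * (1 + x)) * (1 - x)^-1 by rewrite !mulrA.
have -> : (1 - x) * (1 + x) = (1 + x) * (1 - x).
  rewrite !(mulrDr, mulrDl, mulrBr, mulrBl, mul1r, mulr1).
  by rewrite ?mulNr ?mulrN !addrA subrK addrK.
by rewrite mulKr // mulrV.
Qed.

Lemma E_facts (E : fieldType) (c : {rmorphism E -> E}) n (P : 'M[E]_(n.*2.+1)) :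
  Sm (map_mx c P) = - P -> (1 + P) \in unitmx -> (1 - P) \in unitmx ->
  [/\ Sm (map_mx c (P *m (1 + P))) = (1 - P) *m (- P),
      - Nmap c (1 + P) = - ((1 + P) *m invmx (1 - P))
    & in_unitary c (- ((1 + P) *m invmx (1 - P)))].
Proof.
move=> hS u1 u2.
have S1P : Sm (map_mx c (1 + P)) = 1 - P by rewrite map_mxD map_mx1 SmD hS Sm1.
split.
- by rewrite map_mxM Sm_mul S1P hS.
- by rewrite /Nmap theta_Sm S1P.
apply/eqP.
have -> : (map_mx c (- ((1 + P) *m invmx (1 - P))))^T *m Jmx E n.*2.+1
        = Jmx E n.*2.+1 *m Sm (map_mx c (- ((1 + P) *m invmx (1 - P)))).
  by rewrite /Sm !mulmxA JJ mul1mx.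
rewrite -mulmxA; apply: (@eq_trans _ _ (Jmx E n.*2.+1 *m 1%:M)); last by rewrite mulmx1.
congr (_ *m _).
rewrite map_mxN SmN map_mxM Sm_mul map_invmx Sm_inv.
have -> : map_mx c (1 - P) = 1 - map_mx c P by rewrite map_mxD map_mxN map_mx1.
rewrite SmD SmN Sm1 hS opprK S1P mulNmx mulmxN opprK.
exact: (ring_unitary u1 u2).
Qed.
Section Conj.
Variable (F : fieldType) (k : nat).
Implicit Types A B V : 'M[F]_k.

Definition cj V A := invmx V *m A *m V.

Lemma cjM V A B : V \in unitmx -> cj V (A *m B) = cj V A *m cj V B.
Proof.
move=> uV; rewrite /cj !mulmxA; congr (_ *m _).
by rewrite -[invmx V *m A *m V *m invmx V]mulmxA mulmxV // mulmx1.
Qed.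

Lemma cj1 V : V \in unitmx -> cj V 1%:M = 1%:M.
Proof. by move=> uV; rewrite /cj mulmx1 mulVmx. Qed.

Lemma cjD V A B : cj V (A + B) = cj V A + cj V B.
Proof. by rewrite /cj mulmxDr mulmxDl. Qed.

Lemma cjN V A : cj V (- A) = - cj V A.
Proof. by rewrite /cj mulmxN mulNmx. Qed.

Lemma cjK V A : V \in unitmx -> V *m cj V A *m invmx V = A.
Proof. by move=> uV; rewrite /cj !mulmxA mulmxV // mul1mx mulmxK. Qed.

Lemma cj_unit V A : V \in unitmx -> (cj V A \in unitmx) = (A \in unitmx).
Proof. by move=> uV; rewrite /cj !unitmx_mul unitmx_inv uV andbT. Qed.

Lemma cj_inv V A : V \in unitmx -> cj V (invmx A) = invmx (cj V A).
Proof.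
move=> uV; case uA: (A \in unitmx); last first.
  by rewrite !invmx_out // inE /= ?cj_unit ?uA.
have h : cj V A *m cj V (invmx A) = 1%:M by rewrite -cjM // mulmxV // cj1.
have uS : cj V A \in unitmx by rewrite cj_unit.
by rewrite -[LHS](mulKmx uS) h mulmx1.
Qed.

Lemma diag_unit (d : 'rV[F]_k) : (forall i, d 0 i != 0) -> diag_mx d \in unitmx.
Proof. by move=> h; rewrite unitmxE det_diag unitfE; apply/prodf_neq0 => i _. Qed.

Lemma diag1D (d : 'rV[F]_k) : 1%:M + diag_mx d = diag_mx (\row_i (1 + d 0 i)).
Proof.
apply/matrixP => i j; rewrite !mxE; case: eqP => _; by rewrite ?mulr1n ?mulr0n ?addr0.
Qed.

Lemma diagN (d : 'rV[F]_k) : - diag_mx d = diag_mx (\row_i (- d 0 i)).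
Proof.
apply/matrixP => i j; rewrite !mxE; case: eqP => _; by rewrite ?mulr1n ?mulr0n ?oppr0.
Qed.

Lemma diag_inv (d : 'rV[F]_k) : (forall i, d 0 i != 0) ->
  invmx (diag_mx d) = diag_mx (\row_i (d 0 i)^-1).
Proof.
move=> h; have u := diag_unit h.
have e : diag_mx d *m diag_mx (\row_i (d 0 i)^-1) = 1%:M.
  rewrite mulmx_diag -diag_const_mx; congr diag_mx; apply/rowP => i.
  by rewrite !mxE divff.
by rewrite -[RHS](mulKmx u) e mulmx1.
Qed.

Lemma diag_comm (d e : 'rV[F]_k) : diag_mx d *m diag_mx e = diag_mx e *m diag_mx d.
Proof. by rewrite !mulmx_diag; congr diag_mx; apply/rowP => i; rewrite !mxE mulrC. Qed.

Lemma comm_diag_is_diag (X : 'M[F]_k) (d : 'rV[F]_k) : injective (d 0) ->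
  X *m diag_mx d = diag_mx d *m X -> X = diag_mx (\row_i X i i).
Proof.
move=> inj e; apply/matrixP => i j; rewrite !mxE.
case: eqP => [->|ne]; first by rewrite mulr1n.
rewrite mulr0n; move/matrixP: e => /(_ i j); rewrite mul_mx_diag mul_diag_mx !mxE.
move/eqP; rewrite [_ * X i j]mulrC -subr_eq0 -mulrBr mulf_eq0 => /orP[/eqP //|].
by rewrite subr_eq0 => /eqP /inj e; exfalso; apply: ne.
Qed.

Lemma comm_reg V (h : 'M[F]_k) (eta : 'rV[F]_k) :
  V \in unitmx -> cj V h = diag_mx eta -> injective (eta 0) ->
  forall x y, x *m h = h *m x -> y *m h = h *m y -> x *m y = y *m x.
Proof.
move=> uV hd inj x y hx hy.
have cd : forall z, z *m h = h *m z -> cj V z = diag_mx (\row_i (cj V z) i i).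
  move=> z hz; apply: comm_diag_is_diag inj _.
  by rewrite -hd -!cjM // hz.
rewrite -(cjK x uV) -(cjK y uV) (cd x hx) (cd y hy).
set X := diag_mx _; set Y := diag_mx _.
rewrite !mulmxA -[V *m X *m invmx V *m V]mulmxA mulVmx // mulmx1.
rewrite -[V *m Y *m invmx V *m V]mulmxA mulVmx // mulmx1.
by rewrite -!mulmxA [X *m (Y *m _)]mulmxA diag_comm -mulmxA.
Qed.
End Conj.

Lemma solve_left (R : unitRingType) (x q s : R) :
  q \is a GRing.unit -> s \is a GRing.unit -> x * q * s = q -> x = q * s^-1 * q^-1.
Proof.
move=> uq us e.
have uqs : q * s \is a GRing.unit by rewrite unitrMl.
by rewrite -[x](mulrK uqs) mulrA e invrM // mulrA.
Qed.

Lemma conj_comm (R : unitRingType) (x2 y2 a b q : R) :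
  q \is a GRing.unit -> x2 = q * a * q^-1 -> y2 = q * b * q^-1 ->
  a * b = b * a -> x2 * y2 = y2 * x2.
Proof.
move=> uq -> -> ab.
rewrite !mulrA !mulrVK //.
by rewrite -(mulrA q a) ab mulrA.
Qed.

Lemma K_main (K : fieldType) n (x V : 'M[K]_(n.*2.+1)) (l : 'rV[K]_(n.*2.+1)) :
  2%:R != 0 :> K ->
  V \in unitmx -> injective (l 0) -> (forall i, l 0 i != 0) ->
  (forall i, 1 + l 0 i != 0) -> (forall i, 1 - l 0 i != 0) ->
  cj V x = diag_mx l ->
  [/\ [/\ x \in unitmx, (1 + x) \in unitmx & (1 - x) \in unitmx],
      theta_semisimple (x *m (1 + x), Sm ((1 - x) *m (- x))) /\
      strongly_theta_regular (x *m (1 + x), Sm ((1 - x) *m (- x))),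
      semisimple (- ((1 + x) *m invmx (1 - x))) /\ strongly_regular (- ((1 + x) *m invmx (1 - x)))
    & is_norm (- ((1 + x) *m invmx (1 - x))) (x *m (1 + x), Sm ((1 - x) *m (- x)))].
Proof.
move=> two0 uV inj l0 l1 l2 hx.
set h := - ((1 + x) *m invmx (1 - x)).
set Q := (1 - x) *m (- x).
have c1 : cj V (1 + x) = diag_mx (\row_i (1 + l 0 i)) by rewrite cjD cj1 // hx diag1D.
have c2 : cj V (1 - x) = diag_mx (\row_i (1 - l 0 i)).
  by rewrite cjD cjN cj1 // hx diagN diag1D; congr diag_mx; apply/rowP => i; rewrite !mxE.
have ux : x \in unitmx by rewrite -(cj_unit x uV) hx diag_unit.
have u1 : (1 + x) \in unitmx by rewrite -(cj_unit _ uV) c1 diag_unit // => i; rewrite mxE.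
have u2 : (1 - x) \in unitmx by rewrite -(cj_unit _ uV) c2 diag_unit // => i; rewrite mxE.
set t := \row_i (l 0 i * (1 + l 0 i)).
set s' := \row_i ((1 - l 0 i) * - l 0 i).
set s := \row_i (s' 0 (rev_ord i)).
set eta := \row_i (- ((1 + l 0 i) * (1 - l 0 i)^-1)).
have cg : cj V (x *m (1 + x)) = diag_mx t.
  by rewrite cjM // hx c1 mulmx_diag; congr diag_mx; apply/rowP => i; rewrite !mxE.
have cQ : cj V Q = diag_mx s'.
  by rewrite cjM // c2 cjN hx diagN mulmx_diag; congr diag_mx; apply/rowP => i; rewrite !mxE.
have ch : cj V h = diag_mx eta.
  rewrite cjN cjM // c1 cj_inv // c2 diag_inv; last by move=> i; rewrite mxE.
  by rewrite mulmx_diag diagN; congr diag_mx; apply/rowP => i; rewrite !mxE.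
have uQ : Q \in unitmx by rewrite /Q unitmx_mul u2 -[- x]/(GRing.opp x) unitrN.
have tw : tw_act (invmx V, Sm V) (x *m (1 + x), Sm Q) = diag_pair t s.
  rewrite /tw_act /mul2 /inv2 /theta2 /diag_pair /= !inv_thetaK Sm_invol.
  congr (_, _); first exact: cg.
  by rewrite -!Sm_mul mulmxA -[invmx V *m Q *m V]/(cj V Q) cQ Sm_diag.
have GLx0 : GL2 (invmx V, Sm V) by rewrite /GL2 /= unitmx_inv Sm_unit uV.
have tt : torus_el t by move=> i; rewrite mxE mulf_neq0.
have ts : torus_el s by move=> i; rewrite !mxE mulf_neq0 ?oppr_eq0.
have heta : injective (eta 0).
  move=> i j; rewrite !mxE => /eqP; rewrite eqr_opp eqr_div ?l2 // => /eqP e.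
  apply: inj; apply/eqP; rewrite -subr_eq0.
  have : 2%:R * (l 0 i - l 0 j) = 0.
    have -> : 2%:R * (l 0 i - l 0 j) = (1 + l 0 i) * (1 - l 0 j) - (1 + l 0 j) * (1 - l 0 i) by ring.
    by rewrite e subrr.
  by move/eqP; rewrite mulf_eq0 (negbTE two0).
have uh : h \in unitmx by rewrite -(cj_unit _ uV) ch diag_unit // => i; rewrite mxE oppr_eq0 mulf_neq0 ?invr_eq0.
have hreg : strongly_regular h.
  split => // u w _ _; exact: (comm_reg uV ch heta).
split => //.
- split; first by exists (invmx V, Sm V); split => //; exists t, s.
  split; first by rewrite /GL2 /= unitmx_mul ux u1 Sm_unit.
  have ud1 : x *m (1 + x) \in unitmx by rewrite unitmx_mul ux u1.
  have uSQ : Sm Q \in unitmx by rewrite Sm_unit.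
  have hd : x *m (1 + x) *m invmx Q = h by exact: (ring_h ux u2).
  have key : forall z : 'M_n.*2.+1 * 'M_n.*2.+1, GL2 z ->
      tw_act z (x *m (1 + x), Sm Q) = (x *m (1 + x), Sm Q) ->
      z.1 *m h = h *m z.1 /\ z.2 = Sm Q *m invmx (Sm z.1) *m invmx (Sm Q).
    case=> z1 z2; rewrite /GL2 /tw_act /mul2 /inv2 /theta2 /= !inv_thetaK.
    move=> /andP[uz1 uz2] [e1 e2].
    have uSz1 : Sm z1 \in unitmx by rewrite Sm_unit.
    split; last exact: (solve_left uSQ uSz1 e2).
    have e2' : z1 *m Q *m Sm z2 = Q.
      by have := congr1 (@Sm K n) e2; rewrite (Sm_mul (z2 *m Sm Q)) (Sm_mul z2) !Sm_invol mulmxA.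
    rewrite -hd; exact: (twist_comm uz1 ud1 uQ e1 e2').
  case=> [z1 z2] [w1 w2] Gz Gw ez ew.
  have [hz1 hz2] := key _ Gz ez; have [hw1 hw2] := key _ Gw ew.
  move: Gz Gw; rewrite /GL2 /= => /andP[uz1 _] /andP[uw1 _].
  rewrite /mul2 /=; congr (_, _); first exact: (comm_reg uV ch heta).
  apply: (conj_comm uSQ hz2 hw2).
  have cS : Sm z1 *m Sm w1 = Sm w1 *m Sm z1.
    by rewrite -!Sm_mul (comm_reg uV ch heta hz1 hw1).
  have := commrV (commr_sym (commrV (cS : GRing.comm (Sm z1) (Sm w1)))).
  by rewrite /GRing.comm.
- split => //; exists (invmx V); split; first by rewrite unitmx_inv.
  exists eta; split; first by move=> i; rewrite mxE oppr_eq0 mulf_neq0 ?invr_eq0.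
  by rewrite invmxK.
exists t, s; split => //; first by exists (invmx V, Sm V).
exists (invmx V); split; first by rewrite unitmx_inv.
rewrite invmxK -[invmx V *m h *m V]/(cj V h) ch; congr diag_mx; apply/rowP => i.
rewrite !mxE rev_ordK; have := l0 i; have := l2 i; move: (l 0 i) => a a1 a0.
field.
by rewrite oppr_eq0 a0 a1.
Qed.
Lemma roots_exist (K : closedFieldType) (k : nat) (b : K) :
  b != 0 -> (k.+1)%:R != 0 :> K ->
  exists l : 'rV[K]_(k.+1), (forall i, l 0 i ^+ k.+1 = b) /\ injective (l 0).
Proof.
move=> b0 k0.
set p := 'X^(k.+1) - b%:P.
have [rs prs] := closed_field_poly_normal p.
rewrite lead_coefXnsubC // scale1r in prs.
have sz : size rs = k.+1.
  have := size_XnsubC b (ltn0Sn k); rewrite -/p prs size_prod_XsubC.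
  by case.
have rt : forall x, root p x -> x ^+ k.+1 = b.
  by move=> x; rewrite rootE /p hornerD hornerN hornerXn hornerC subr_eq0 => /eqP.
have sep : separable_poly p.
  rewrite unlock; apply/Pdiv.ClosedField.coprimepP => x rx; have hx := rt x rx.
  rewrite /p derivB derivXn derivC subr0 hornerMn hornerXn /=.
rewrite -mulr_natr mulf_neq0 // expf_neq0 //.
  apply/eqP => x0; move: hx; rewrite x0 expr0n /= => hb.
  by move: b0; rewrite -hb eqxx.
have urs : uniq rs by rewrite -separable_prod_XsubC -prs.
exists (\row_i rs`_i); split.
  move=> i; rewrite mxE; apply: rt; rewrite prs root_prod_XsubC mem_nth //.
  by rewrite sz.
move=> i j; rewrite !mxE => /eqP; rewrite nth_uniq ?sz // => /eqP; exact: val_inj.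
Qed.

Lemma phimx_eigen (F : fieldType) n (w a : F) (l : 'rV[F]_(n.*2.+1)) :
  (forall i, l 0 i ^+ n.*2.+1 = w * a) ->
  phimx w a n.*2.+1 *m Vandermonde n.*2.+1 l = Vandermonde n.*2.+1 l *m diag_mx l.
Proof.
move=> hl; apply/matrixP => i k.
rewrite mul_mx_diag !mxE (bigD1 (ordS i)) //= big1; last first.
  by move=> j /negbTE hj; rewrite phimxE hj mul0r.
rewrite addr0 phimxE eqxx !mxE.
case: i => [i Hi] /=.
have [hi|hi] := eqVneq i n.*2.
  by rewrite hi modnn expr0 mulr1 -(hl k) exprSr.
by rewrite modn_small ?mul1r ?exprSr //; lia.
Qed.

Lemma Vandermonde_unit (F : fieldType) k (l : 'rV[F]_k) :
  injective (l 0) -> Vandermonde k l \in unitmx.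
Proof.
move=> inj; rewrite unitmxE det_Vandermonde unitfE.
apply/prodf_neq0 => i _; apply/prodf_neq0 => j ij; rewrite subr_eq0.
by apply/eqP => /inj e; move: ij; rewrite e ltnn.
Qed.

Lemma diag_package (K : closedFieldType) n (wk ak : K) :
  wk * ak != 0 -> (n.*2.+1)%:R != 0 :> K -> wk * ak != 1 -> wk * ak != -1 ->
  exists V : 'M[K]_(n.*2.+1), exists l : 'rV[K]_(n.*2.+1),
  [/\ V \in unitmx, injective (l 0),
      (forall i, l 0 i != 0) /\ (forall i, 1 + l 0 i != 0) /\ (forall i, 1 - l 0 i != 0)
    & invmx V *m phimx wk ak n.*2.+1 *m V = diag_mx l].
Proof.
move=> b0 m0 b1 bm1.
have [l [hl inj]] := roots_exist b0 m0.
exists (Vandermonde n.*2.+1 l), l.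
have uV := Vandermonde_unit inj.
split => //; last by rewrite -mulmxA phimx_eigen // mulmxA mulVmx // mul1mx.
split; [|split].
- move=> i; apply/eqP => e.
  by move: b0; rewrite -(hl i) e expr0n /= eqxx.
- move=> i; apply/eqP => e; move: bm1; rewrite -(hl i).
  have -> : l 0 i = -1 by apply/eqP; rewrite -(inj_eq (addrI 1)) e addrN.
  by rewrite -signr_odd /= odd_double /= expr1 eqxx.
- move=> i; apply/eqP => e; move: b1; rewrite -(hl i).
  have -> : l 0 i = 1 by apply/eqP; rewrite -subr_eq0 -opprB oppr_eq0 e.
  by rewrite expr1n eqxx.
Qed.
Section Val.
Variables (E : fieldType) (v : E -> int).
Hypothesis dv : discrete_valuation v.

Lemma vM x y : x != 0 -> y != 0 -> v (x * y) = v x + v y.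
Proof. by case: dv => h _ _; apply: h. Qed.

Lemma v1 : v 1 = 0.
Proof.
have e : v 1 = v 1 + v 1 by rewrite -vM ?oner_neq0 // mulr1.
lia.
Qed.

Lemma vN1 : v (-1) = 0.
Proof.
have h : (-1 : E) != 0 by rewrite oppr_eq0 oner_neq0.
have e : v 1 = v (-1) + v (-1) by rewrite -vM // mulrNN mulr1.
move: e; rewrite v1; lia.
Qed.


Lemma vV x : x != 0 -> v x^-1 = - v x.
Proof.
move=> x0; have xi : x^-1 != 0 by rewrite invr_eq0.
have e : v 1 = v x + v x^-1 by rewrite -vM // mulfV.
move: e; rewrite v1; lia.
Qed.

Lemma vX x k : x != 0 -> v (x ^+ k) = v x *+ k.
Proof.
move=> x0; elim: k => [|k IH]; first by rewrite expr0 v1.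
by rewrite exprS vM ?expf_neq0 // IH mulrS.
Qed.

Lemma v_root x k : (0 < k)%N -> x ^+ k = 1 -> x != 0 /\ v x = 0.
Proof.
move=> k0 e; have x0 : x != 0.
  by apply/eqP => x0; move: e; rewrite x0 expr0n; case: k k0 => // k _ /= /esym/eqP; rewrite oner_eq0.
split => //; have := vX k x0; rewrite e v1 => /esym/eqP; rewrite mulrn_eq0.
by move: k0; case: k {e} => // k _ /= /eqP.
Qed.

Lemma vgeN k x : vge v k x -> vge v k (- x).
Proof.
rewrite /vge oppr_eq0; case: eqP => //= /eqP x0.
by rewrite -mulN1r vM ?oppr_eq0 ?oner_neq0 // vN1 add0r.
Qed.

Lemma vgeD k x y : vge v k x -> vge v k y -> vge v k (x + y).
Proof. by case: dv => _ h _; apply: h. Qed.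

Lemma q_ge2 (c : {rmorphism E -> E}) q : residue_card v (fun x => c x == x) q -> (2 <= q)%N.
Proof.
case=> s [sz hs hinc hex].
have h0 : c 0 == 0 by rewrite rmorph0.
have o0 : in_O v 0 by rewrite /in_O /vge eqxx.
have h1 : c 1 == 1 by rewrite rmorph1.
have o1 : in_O v 1 by rewrite /in_O /vge v1 lexx orbT.
have [y0 ys0 m0] := hex 0 h0 o0; have [y1 ys1 m1] := hex 1 h1 o1.
rewrite leqNgt; apply/negP => hq.
have : in_m v (1 - y1 + - (0 - y0)) by apply: vgeD => //; apply: vgeN.
move: ys0 ys1; rewrite -sz in hq; case: s hq {hs hinc hex sz} => [|a [|b r]] //= _.
rewrite !mem_seq1 => /eqP -> /eqP ->; rewrite sub0r opprK subrK /in_m /vge v1 oner_eq0.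
by [].
Qed.
End Val.

Lemma eps_facts (E : fieldType) (v : E -> int) (c : {rmorphism E -> E}) (eps : E) q :
  discrete_valuation v -> (2 <= q)%N -> eps ^+ (q ^ 2 - 1) = 1 -> c (eps ^+ 2) = eps ^+ 2 ->
  ~ (exists y : E, [/\ c y = y, in_O v y & in_m v (y ^+ 2 - eps ^+ 2)]) ->
  [/\ eps != 0, v eps = 0 & c eps = - eps].
Proof.
move=> dv q2 he hc hns.
have [e0 ve] : eps != 0 /\ v eps = 0.
  apply: (v_root dv _ he); rewrite subn_gt0; apply: (@leq_trans 4) => //.
  by rewrite expnS expn1; nia.
split => //.
have : (c eps - eps) * (c eps + eps) = 0.
  have -> : (c eps - eps) * (c eps + eps) = c eps ^+ 2 - eps ^+ 2 by ring.
  by rewrite -rmorphXn hc subrr.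
move/eqP; rewrite mulf_eq0 => /orP[|].
  rewrite subr_eq0 => /eqP ce; exfalso; apply: hns; exists eps; split => //.
    by rewrite /in_O /vge ve lexx orbT.
  by rewrite subrr /in_m /vge eqxx.
by rewrite addr_eq0 => /eqP.
Qed.

Lemma b_facts (E : fieldType) (v : E -> int) (varpi eps u : E) q :
  discrete_valuation v -> (2 <= q)%N -> varpi != 0 -> v varpi = 1 ->
  eps != 0 -> v eps = 0 -> u ^+ (q - 1) = 1 ->
  let b := varpi * (eps^-1 * u) in [/\ b != 0, b != 1 & b != -1].
Proof.
move=> dv q2 w0 vw e0 ve hu b.
have [u0 vu] : u != 0 /\ v u = 0 by apply: (v_root dv _ hu); rewrite subn_gt0.
have ei0 : eps^-1 != 0 by rewrite invr_eq0.
have b0 : b != 0 by rewrite /b !mulf_neq0.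
have vb : v b = 1 by rewrite /b !vM ?mulf_neq0 // vV // ve vu vw; lia.
split => //; apply/eqP => e; move: vb; rewrite e ?v1 ?vN1 //.
Qed.

Unset Implicit Arguments.
Set Strict Implicit.

Theorem proposition6p2 (p q n : nat) (E : fieldType) (v : E -> int)
    (c : {rmorphism E -> E}) (varpi eps u : E)
    (K : closedFieldType) (iota : {rmorphism E -> K}) :
  unramified_quadratic_padic p q v c ->
  c varpi = varpi -> varpi != 0 -> v varpi = 1 ->
  eps ^+ (q ^ 2 - 1) = 1 -> c (eps ^+ 2) = eps ^+ 2 ->
  ~ (exists y : E, [/\ c y = y, in_O v y & in_m v (y ^+ 2 - eps ^+ 2)]) ->
  c u = u -> u ^+ (q - 1) = 1 ->
  algebraic_closure_of iota ->
  let P := phimx varpi (eps^-1 * u) n.*2.+1 in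
  let g := P *m (1 + P) in
  let h := - Nmap c (1 + P) in
  [/\ g \in unitmx,
      theta_semisimple (bc iota c g) /\ strongly_theta_regular (bc iota c g),
      in_unitary c h,
      semisimple (map_mx iota h) /\ strongly_regular (map_mx iota h)
    & is_norm (map_mx iota h) (bc iota c g)].
Proof.
move=> [[hchar dv _] [_ _ _ [rq _] _]] hcw w0 vw heps hceps hns hcu hu _ P g h.
have q2 := q_ge2 dv rq.
have [e0 ve ce] := eps_facts dv q2 heps hceps hns.
have [b0 b1 bm1] := b_facts dv q2 w0 vw e0 ve hu.
set a := eps^-1 * u.
have ca : c a = - a by rewrite /a rmorphM fmorphV ce hcu invrN mulNr.
have hchar' := (pcharf0P _).1 hchar.
have natK : forall k : nat, (k.+1)%:R != 0 :> K.
  by move=> k; rewrite -(rmorph_nat iota) fmorph_eq0 hchar'.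
have iinj : forall x y : E, (iota x == iota y) = (x == y) by move=> x y; rewrite (inj_eq (fmorph_inj iota)).
have bk0 : iota varpi * iota a != 0 by rewrite -rmorphM fmorph_eq0.
have bk1 : iota varpi * iota a != 1 by rewrite -rmorphM -(rmorph1 iota) iinj.
have bkm1 : iota varpi * iota a != -1 by rewrite -rmorphM -(rmorphN1 iota) iinj.
have [V [l [uV inj [l0 [l1 l2]] hd]]] := @diag_package K n _ _ bk0 (natK n.*2) bk1 bkm1.
have two0 : 2%:R != 0 :> K by apply: natK.
set Pk := phimx (iota varpi) (iota a) n.*2.+1.
have ePk : map_mx iota P = Pk by rewrite /P map_phimx.
have [[uxk u1k u2k] [ts tr] [ss sr] nrm] := K_main two0 uV inj l0 l1 l2 hd.
have uP : P \in unitmx by rewrite -(map_unitmx iota) ePk.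
have u1 : (1 + P) \in unitmx by rewrite -(map_unitmx iota) map_mxD map_mx1 ePk.
have u2 : (1 - P) \in unitmx by rewrite -(map_unitmx iota) map_mxD map_mxN map_mx1 ePk.
have hS : Sm (map_mx c P) = - P by rewrite /P map_phimx hcw ca Sm_phimx.
have [eS eN eU] := E_facts hS u1 u2.
have ebc : bc iota c g = (Pk *m (1 + Pk), Sm ((1 - Pk) *m (- Pk))).
  rewrite /bc /g; congr (_, _); first by rewrite map_mxM map_mxD map_mx1 ePk.
  rewrite -[LHS]Sm_invol -map_Sm eS map_mxM map_mxD map_mxN map_mx1 ePk.
  by [].
have eh : map_mx iota h = - ((1 + Pk) *m invmx (1 - Pk)).
  rewrite /h eN (map_mxN iota) (map_mxM iota) (map_invmx iota) !(map_mxD iota) (map_mxN iota) (map_mx1 iota) ePk.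
  by [].
rewrite eh; move: ebc; set B := bc _ _ _ => ->.
split => //; first by rewrite /g unitmx_mul uP u1.
by rewrite /h eN.
Qed.
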